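(* Let $k\ge1$ be an integer and let $a\in\mathbb{C}$ with $a\notin\{-1,-2,-3,\dots\}$. Then $${}_2F_1\!\left(\left.\begin{array}{c}a,\ a+k\\ a+1\end{array}\right|\frac12\right)=2^{a}\left[2^{k-1}-\frac{k-1}{a+1}\,{}_2F_1\!\left(\left.\begin{array}{c}2-k,\ a+1\\ a+2\end{array}\right|-1\right)\right],$$ equivalently $${}_2F_1\!\left(a,a+k;a+1;\tfrac12\right)=2^{a}\left(2^{k-1}-\sum_{i=1}^{k-1}\frac{(k-1)!}{(i-1)!\,(k-i-1)!\,(a+i)}\right).$$ (For $k\ge2$ the ${}_2F_1$ on the right is a finite sum with $k-1$ terms; for $k=1$ the bracket equals $1$.)
   Context: ${}_2F_1(a,b;c;z)=\sum_{m\ge0}\frac{(a)_m(b)_m}{m!\,(c)_m}z^m$ with $(\alpha)_m=\Gamma(\alpha+m)/\Gamma(\alpha)$; when an upper parameter is a nonpositive integer $-N$ the series terminates after the term $m=N$. *)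

(* Defs.v *)
From Stdlib Require Import Reals Arith Factorial.
Open Scope R_scope.

(* Complex numbers z = (Re z, Im z). *)
Definition Cplx : Type := (R * R)%type.
Definition RtoC (x : R) : Cplx := (x, 0).
Definition Cadd (x y : Cplx) : Cplx := (fst x + fst y, snd x + snd y).
Definition Copp (x : Cplx) : Cplx := (- fst x, - snd x).
Definition Cmul (x y : Cplx) : Cplx :=
  (fst x * fst y - snd x * snd y, fst x * snd y + snd x * fst y).
(* multiplicative inverse (only meaningful for x <> 0) *)
Definition Cinv (x : Cplx) : Cplx :=
  let d := fst x * fst x + snd x * snd x in (fst x / d, - snd x / d).
Fixpoint Cpow (x : Cplx) (n : nat) : Cplx :=
  match n with O => RtoC 1 | S n' => Cmul (Cpow x n') x end.
(* complex exponential; 2^a is defined as Cexp (a * ln 2) (principal value) *)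
Definition Cexp (z : Cplx) : Cplx := (exp (fst z) * cos (snd z), exp (fst z) * sin (snd z)).
Definition Cpow2 (a : Cplx) : Cplx := Cexp (Cmul a (RtoC (ln 2))).

Fixpoint poch (alpha : Cplx) (m : nat) : Cplx :=
  match m with
  | O => RtoC 1
  | S m' => Cmul (poch alpha m') (Cadd alpha (RtoC (INR m')))
  end.

Definition hyp2f1_term (a b c z : Cplx) (m : nat) : Cplx :=
  Cmul (Cmul (Cmul (poch a m) (poch b m))
             (Cinv (Cmul (RtoC (INR (fact m))) (poch c m))))
       (Cpow z m).

Fixpoint Csum (f : nat -> Cplx) (n : nat) : Cplx :=
  match n with O => RtoC 0 | S n' => Cadd (Csum f n') (f n') end.

Definition Cseries_sum (f : nat -> Cplx) (l : Cplx) : Prop :=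
  Un_cv (fun n => fst (Csum f n)) (fst l) /\ Un_cv (fun n => snd (Csum f n)) (snd l).

(* Main.v *)
Require Import Defs.
From Stdlib Require Import Reals Arith Factorial Lia Lra.
From Coquelicot Require Import Coquelicot.
Open Scope R_scope.

Ltac tc := match goal with |- @eq Cplx ?x ?y => change (@eq C x y) end.
Ltac cring := try tc; ring.
Ltac norm := change Defs.Cmul with Cmult in *; change Defs.Cadd with Cplus in *; change Defs.Copp with Copp in *; change Defs.RtoC with RtoC in *.

Lemma RtoC_eq x : Defs.RtoC x = RtoC x. Proof. reflexivity. Qed.
Lemma Cmul_eq x y : Defs.Cmul x y = Cmult x y. Proof. reflexivity. Qed.
Lemma Cadd_eq x y : Defs.Cadd x y = Cplus x y. Proof. reflexivity. Qed.
Lemma Copp_eq x : Defs.Copp x = Copp x. Proof. reflexivity. Qed.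
Lemma Cinv_eq x : Defs.Cinv x = Cinv x.
Proof. destruct x as [u v]. unfold Defs.Cinv, Cinv. simpl. f_equal; f_equal; ring. Qed.
Lemma Cpow_eq x n : Defs.Cpow x n = Cpow x n.
Proof. induction n; simpl. reflexivity. rewrite Cmul_eq, IHn. apply Cmult_comm. Qed.

Ltac normall := norm; rewrite ?Cinv_eq, ?Cpow_eq.

Lemma Csum_S f n : Csum f (S n) = (Csum f n + f n)%C. Proof. reflexivity. Qed.
Lemma Csum_0 f : Csum f 0 = RtoC 0. Proof. reflexivity. Qed.

Lemma Csum_plus f g n : Csum (fun i => f i + g i)%C n = (Csum f n + Csum g n)%C.
Proof. induction n. change (RtoC 0 = RtoC 0 + RtoC 0)%C. cring.
 rewrite !Csum_S, IHn. cring. Qed.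
Lemma Csum_scal c f n : Csum (fun i => c * f i)%C n = (c * Csum f n)%C.
Proof. induction n. change (RtoC 0 = c * RtoC 0)%C. cring.
 rewrite !Csum_S, IHn. cring. Qed.
Lemma Csum_ext_lt f g n : (forall i, (i < n)%nat -> f i = g i) -> Csum f n = Csum g n.
Proof. induction n; intros H. reflexivity. rewrite !Csum_S, IHn, H; auto. Qed.
Lemma Csum_first f n : Csum f (S n) = (f 0%nat + Csum (fun i => f (S i)) n)%C.
Proof. induction n. change (RtoC 0 + f 0%nat = f 0%nat + RtoC 0)%C. cring.
 rewrite Csum_S, IHn, Csum_S. cring. Qed.

Lemma Cseries_iff f l : Cseries_sum f l <->
  is_lim_seq (fun n => fst (Csum f n)) (fst l) /\ is_lim_seq (fun n => snd (Csum f n)) (snd l).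
Proof. unfold Cseries_sum. rewrite !is_lim_seq_Reals. tauto. Qed.

Lemma Cseries_ext f g l : (forall m, f m = g m) -> Cseries_sum f l -> Cseries_sum g l.
Proof. intros H. assert (f = g) by (apply FunctionalExtensionality.functional_extensionality; auto). subst; auto. Qed.

Lemma Cseries_plus f g l1 l2 : Cseries_sum f l1 -> Cseries_sum g l2 ->
  Cseries_sum (fun m => f m + g m)%C (l1 + l2)%C.
Proof. rewrite !Cseries_iff. intros [A B] [C D].
 split; [eapply is_lim_seq_ext; [intros n; rewrite Csum_plus; reflexivity|];
   apply (is_lim_seq_plus' _ _ _ _ A C) |].
 eapply is_lim_seq_ext; [intros n; rewrite Csum_plus; reflexivity|];
   apply (is_lim_seq_plus' _ _ _ _ B D). Qed.

Lemma Cseries_scal c f l : Cseries_sum f l -> Cseries_sum (fun m => c * f m)%C (c * l)%C.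
Proof. rewrite !Cseries_iff. intros [A B]. split.
 - eapply is_lim_seq_ext; [intros n; rewrite Csum_scal; reflexivity|]. simpl.
   apply is_lim_seq_minus'; apply is_lim_seq_mult'; auto; apply is_lim_seq_const.
 - eapply is_lim_seq_ext; [intros n; rewrite Csum_scal; reflexivity|]. simpl.
   apply is_lim_seq_plus'; apply is_lim_seq_mult'; auto; apply is_lim_seq_const. Qed.

Definition shiftC (f : nat -> C) (m : nat) : C := match m with O => RtoC 0 | S j => f j end.
Lemma Csum_shift f n : Csum (shiftC f) (S n) = Csum f n.
Proof. induction n. change (RtoC 0 + RtoC 0 = RtoC 0)%C. cring.
 rewrite Csum_S, IHn. reflexivity. Qed.
Lemma Cseries_shift f l : Cseries_sum f l -> Cseries_sum (shiftC f) l.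
Proof. rewrite !Cseries_iff. intros [A B]. split.
 - apply is_lim_seq_incr_1. eapply is_lim_seq_ext; [intros n; rewrite Csum_shift; reflexivity|]. auto.
 - apply is_lim_seq_incr_1. eapply is_lim_seq_ext; [intros n; rewrite Csum_shift; reflexivity|]. auto.
Qed.


Lemma RtoC_plus' x y : RtoC (x + y) = (RtoC x + RtoC y)%C.
Proof. unfold RtoC, Cplus; simpl; f_equal; ring. Qed.
Lemma RtoC_mult' x y : RtoC (x * y) = (RtoC x * RtoC y)%C.
Proof. unfold RtoC, Cmult; simpl; f_equal; ring. Qed.
Lemma RtoC_nz x : x <> 0 -> RtoC x <> RtoC 0.
Proof. intros H E. apply H. injection E; auto. Qed.
Lemma Cmult_nz (x y : C) : x <> RtoC 0 -> y <> RtoC 0 -> (x * y)%C <> RtoC 0.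
Proof. intros Hx Hy E. apply Hx. assert (x = (x*y)*/y)%C by (field; auto).
 rewrite H, E. field. auto. Qed.
Lemma fact_nz n : RtoC (INR (fact n)) <> RtoC 0.
Proof. apply RtoC_nz, INR_fact_neq_0. Qed.
Lemma Sn_nz n : RtoC (INR (S n)) <> RtoC 0.
Proof. apply RtoC_nz, not_0_INR; lia. Qed.

Lemma poch_S a m : poch a (S m) = (poch a m * (a + RtoC (INR m)))%C.
Proof. reflexivity. Qed.
Lemma poch_0 a : poch a 0 = RtoC 1. Proof. reflexivity. Qed.
Lemma poch_Sl a m : poch a (S m) = (a * poch (a + RtoC 1) m)%C.
Proof. induction m. rewrite poch_S, !poch_0. change (INR 0) with 0. cring.
 rewrite poch_S, IHm, poch_S, S_INR, RtoC_plus'. cring. Qed.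
Lemma poch_nz c m : (forall j, (j < m)%nat -> (c + RtoC (INR j))%C <> RtoC 0) -> poch c m <> RtoC 0.
Proof. induction m; intros H. rewrite poch_0. apply RtoC_nz; lra.
 rewrite poch_S. apply Cmult_nz; auto. Qed.
Lemma poch_pascal b n : poch (b + RtoC 1)%C (S n) =
  (poch b (S n) + RtoC (INR (S n)) * poch (b + RtoC 1) n)%C.
Proof. rewrite (poch_Sl b n), (poch_S (b + RtoC 1)%C n), S_INR, RtoC_plus'. cring. Qed.
Lemma fact_S n : RtoC (INR (fact (S n))) = (RtoC (INR (S n)) * RtoC (INR (fact n)))%C.
Proof. rewrite fact_simpl, mult_INR, RtoC_mult'. reflexivity. Qed.

Definition hh : C := RtoC (1/2).

Lemma term_rec a b n (ha1 : (a + RtoC 1)%C <> RtoC 0)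
  (hp2 : poch (a + RtoC 1 + RtoC 1)%C n <> RtoC 0) :
  (hyp2f1_term a (b + RtoC 1) (a + RtoC 1) hh (S n))%C =
  (hyp2f1_term a b (a + RtoC 1) hh (S n) +
   (a * hh / (a + RtoC 1)) * hyp2f1_term (a + RtoC 1) (b + RtoC 1) (a + RtoC 1 + RtoC 1) hh n)%C.
Proof.
 unfold hyp2f1_term. normall.
 rewrite poch_pascal, (poch_Sl a n), (poch_Sl (a + RtoC 1)%C n), fact_S.
 change (Cpow hh (S n)) with (hh * Cpow hh n)%C.
 pose proof (fact_nz n). pose proof (Sn_nz n).
 tc. field. repeat split; auto.
Qed.


Lemma dpl_eq f x l l' : derivable_pt_lim f x l -> l = l' -> derivable_pt_lim f x l'.
Proof. intros H ->; auto. Qed.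

Definition CD (f : R -> C) (u : C) (x : R) :=
  derivable_pt_lim (fun t => fst (f t)) x (fst u) /\ derivable_pt_lim (fun t => snd (f t)) x (snd u).

Lemma CD_eq f u v x : CD f u x -> u = v -> CD f v x. Proof. intros H ->; auto. Qed.

Lemma CD_plus f g u v x : CD f u x -> CD g v x -> CD (fun t => f t + g t)%C (u + v)%C x.
Proof. intros [A B] [C D]. split.
 - exact (derivable_pt_lim_plus _ _ _ _ _ A C).
 - exact (derivable_pt_lim_plus _ _ _ _ _ B D). Qed.

Lemma CD_mult f g u v x : CD f u x -> CD g v x ->
  CD (fun t => f t * g t)%C (u * g x + f x * v)%C x.
Proof. intros [A B] [C D]. split.
 - eapply dpl_eq. exact (derivable_pt_lim_minus _ _ _ _ _
      (derivable_pt_lim_mult _ _ _ _ _ A C) (derivable_pt_lim_mult _ _ _ _ _ B D)).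
   simpl. ring.
 - eapply dpl_eq. exact (derivable_pt_lim_plus _ _ _ _ _
      (derivable_pt_lim_mult _ _ _ _ _ A D) (derivable_pt_lim_mult _ _ _ _ _ B C)).
   simpl. ring. Qed.

Lemma CD_const (c : C) x : CD (fun _ => c) (RtoC 0) x.
Proof. split; apply (derivable_pt_lim_const _ x). Qed.

Lemma CD_real r r' x : derivable_pt_lim r x r' -> CD (fun t => RtoC (r t)) (RtoC r') x.
Proof. intros H. split. exact H. apply (derivable_pt_lim_const 0 x). Qed.

Lemma CD_exp h u x : CD h u x -> CD (fun t => Defs.Cexp (h t)) (Defs.Cexp (h x) * u)%C x.
Proof. intros [A B]. unfold Defs.Cexp. split.
 - eapply dpl_eq. exact (derivable_pt_lim_mult (comp exp (fun t => fst (h t))) (comp cos (fun t => snd (h t))) _ _ _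
     (derivable_pt_lim_comp _ _ _ _ _ A (derivable_pt_lim_exp _))
     (derivable_pt_lim_comp _ _ _ _ _ B (derivable_pt_lim_cos _))).
   unfold comp; simpl. ring.
 - eapply dpl_eq. exact (derivable_pt_lim_mult (comp exp (fun t => fst (h t))) (comp sin (fun t => snd (h t))) _ _ _
     (derivable_pt_lim_comp _ _ _ _ _ A (derivable_pt_lim_exp _))
     (derivable_pt_lim_comp _ _ _ _ _ B (derivable_pt_lim_sin _))).
   unfold comp; simpl. ring. Qed.

Lemma Cexp_add z w : Defs.Cexp (z + w)%C = (Defs.Cexp z * Defs.Cexp w)%C.
Proof. unfold Defs.Cexp, Cplus, Cmult; simpl. rewrite exp_plus, cos_plus, sin_plus. f_equal; ring. Qed.
Lemma Cexp_0 : Defs.Cexp (RtoC 0) = RtoC 1.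
Proof. unfold Defs.Cexp; simpl. rewrite exp_0, cos_0, sin_0. unfold RtoC; f_equal; ring. Qed.
Lemma Cmod_Cexp z : Cmod (Defs.Cexp z) = exp (fst z).
Proof. unfold Cmod, Defs.Cexp; cbn [fst snd].
 replace ((exp (fst z) * cos (snd z)) ^ 2 + (exp (fst z) * sin (snd z)) ^ 2) with (exp (fst z) ^ 2).
 apply sqrt_pow2. left; apply exp_pos.
 pose proof (sin2_cos2 (snd z)) as H; unfold Rsqr in H.
 replace (exp (fst z)^2) with (exp (fst z)^2 * (sin (snd z) * sin (snd z) + cos (snd z) * cos (snd z))) by (rewrite H; ring). ring. Qed.

Lemma RtoC_minus' x y : RtoC (x - y) = (RtoC x - RtoC y)%C.
Proof. unfold RtoC, Cminus, Cplus, Copp; simpl; f_equal; ring. Qed.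
Lemma RtoC_opp' x : RtoC (- x) = (- RtoC x)%C.
Proof. unfold RtoC, Copp; simpl; f_equal; ring. Qed.
Lemma RtoC_inv' x : x <> 0 -> RtoC (/ x) = (/ RtoC x)%C.
Proof. intros H. unfold RtoC, Cinv; simpl; f_equal; field; auto. Qed.

Definition cc (a : C) m : C := (poch a m * / RtoC (INR (fact m)))%C.
Definition EE (a : C) t : C := Defs.Cexp (a * RtoC (ln (1 - t)))%C.
Definition FF a N t := Csum (fun m => cc a m * RtoC (t ^ m))%C N.
Definition FD a N t := Csum (fun m => cc a m * RtoC (INR m * t ^ pred m))%C N.

Lemma cc_rec a N : (cc a (S N) * RtoC (INR (S N)) = cc a N * (a + RtoC (INR N)))%C.
Proof. unfold cc. rewrite poch_S, fact_S. pose proof (fact_nz N). pose proof (Sn_nz N).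
 try tc; field. auto. Qed.

Lemma CD_EE a t : t < 1 -> CD (EE a) (EE a t * (a * RtoC (- / (1 - t))))%C t.
Proof. intros Ht. unfold EE. apply (CD_exp (fun t => a * RtoC (ln (1 - t)))%C).
 eapply CD_eq. apply (CD_mult (fun _ => a) (fun t => RtoC (ln (1 - t)))).
 apply CD_const. apply CD_real.
 eapply dpl_eq. apply (derivable_pt_lim_comp (fun t => 1 - t) ln).
 apply (derivable_pt_lim_minus (fct_cte 1) id). apply derivable_pt_lim_const. apply derivable_pt_lim_id.
 apply derivable_pt_lim_ln. lra. reflexivity.
 replace (/ (1 - t) * (0 - 1)) with (- / (1 - t)) by ring. cring. Qed.

Lemma CD_FF a N t : CD (FF a N) (FD a N t) t.
Proof. induction N.
 - exact (CD_const (RtoC 0) t).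
 - unfold FF, FD. eapply CD_eq. apply (CD_plus (FF a N) (fun t => cc a N * RtoC (t ^ N))%C).
   exact IHN. apply (CD_mult (fun _ => cc a N) (fun t => RtoC (t ^ N))).
   apply CD_const. apply CD_real. apply derivable_pt_lim_pow.
   rewrite Csum_S. unfold FD. cring. Qed.

Lemma key a N t : (RtoC (1 - t) * FD a N t - a * FF a N t = - (cc a N * RtoC (INR N * t ^ pred N)))%C.
Proof. induction N.
 - unfold FD, FF. rewrite !Csum_0. change (INR 0) with 0. rewrite Rmult_0_l. cring.
 - unfold FD, FF in *. rewrite !Csum_S.
   set (S1 := Csum (fun m => cc a m * RtoC (INR m * t ^ pred m))%C N) in *.
   set (S2 := Csum (fun m => cc a m * RtoC (t ^ m))%C N) in *.
   set (X := RtoC (INR N * t ^ pred N)) in *. set (T := RtoC (t ^ N)).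
   assert (H1 : (RtoC (1 - t) * X = X - RtoC (INR N) * T)%C).
   { unfold X, T. rewrite <- !RtoC_mult', <- RtoC_minus'. f_equal. destruct N; simpl; ring. }
   transitivity ((RtoC (1 - t) * S1 - a * S2) + (cc a N * (RtoC (1 - t) * X) - a * (cc a N * T)))%C.
   cring. rewrite IHN, H1. simpl pred. rewrite RtoC_mult'. fold T.
   transitivity (- ((cc a (S N) * RtoC (INR (S N))) * T))%C. rewrite cc_rec. cring. cring.
Qed.

Lemma CD_G a N t : t < 1 -> CD (fun s => FF a N s * EE a s)%C
  (- (EE a t * (cc a N * RtoC (INR N * t ^ pred N / (1 - t)))))%C t.
Proof. intros Ht. eapply CD_eq. apply (CD_mult (FF a N) (EE a)). apply CD_FF. apply CD_EE; auto.
 assert (Hn : 1 - t <> 0) by lra. pose proof (RtoC_nz _ Hn) as Hc.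
 unfold Rdiv. rewrite RtoC_opp', RtoC_inv', (RtoC_mult' _ (/ (1 - t))), RtoC_inv' by auto.
 transitivity (EE a t * (RtoC (1 - t) * FD a N t - a * FF a N t) / RtoC (1 - t))%C.
 try tc; field; auto. rewrite key. try tc; field; auto. Qed.

Lemma ln_bound c : 0 <= c <= 1/2 -> Rabs (ln (1 - c)) <= ln 2.
Proof. intros Hc. assert (A : ln (1 - c) <= 0). { rewrite <- ln_1. apply ln_le; lra. }
 assert (B : ln (1/2) <= ln (1 - c)) by (apply ln_le; lra).
 replace (ln (1/2)) with (- ln 2) in B. rewrite Rabs_left1; lra.
 unfold Rdiv. rewrite Rmult_1_l, ln_Rinv; lra. Qed.

Lemma EE_bound a c : 0 <= c <= 1/2 -> Cmod (EE a c) <= exp (Rabs (fst a) * ln 2).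
Proof. intros Hc. unfold EE. rewrite Cmod_Cexp. simpl.
 replace (fst a * ln (1 - c) - snd a * 0) with (fst a * ln (1 - c)) by ring.
 assert (fst a * ln (1 - c) <= Rabs (fst a) * ln 2).
 { apply Rle_trans with (Rabs (fst a * ln (1 - c))). apply Rle_abs.
   rewrite Rabs_mult. apply Rmult_le_compat_l. apply Rabs_pos. apply ln_bound; auto. }
 destruct (Rle_lt_or_eq_dec _ _ H). left; apply exp_increasing; auto. rewrite e; lra. Qed.

Definition MM a N := exp (Rabs (fst a) * ln 2) * Cmod (cc a N) * (INR N * (1/2) ^ pred N).

Lemma Gd_bound a N c : 0 <= c <= 1/2 ->
  Cmod (- (EE a c * (cc a N * RtoC (INR N * c ^ pred N / (1 - c)))))%C <= 2 * MM a N.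
Proof. intros Hc. rewrite Cmod_opp, !Cmod_mult, Cmod_R. unfold MM.
 assert (Rabs (INR N * c ^ pred N / (1 - c)) <= 2 * (INR N * (1/2) ^ pred N)).
 { rewrite Rabs_pos_eq. unfold Rdiv.
   assert (c ^ pred N <= (1/2) ^ pred N) by (apply pow_incr; lra).
   assert (/ (1 - c) <= 2). { replace 2 with (/ (1/2)) by field. apply Rinv_le_contravar; lra. }
   assert (0 <= INR N) by apply pos_INR. assert (0 <= c ^ pred N) by (apply pow_le; lra).
   assert (0 <= / (1 - c)) by (left; apply Rinv_0_lt_compat; lra).
   apply Rle_trans with (INR N * (1/2)^pred N * / (1 - c)).
   apply Rmult_le_compat_r; auto. apply Rmult_le_compat_l; auto.
   rewrite Rmult_comm. apply Rmult_le_compat_r; auto. apply Rmult_le_pos; [apply pos_INR|apply pow_le; lra].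
   apply Rmult_le_pos. apply Rmult_le_pos. apply pos_INR. apply pow_le; lra. left; apply Rinv_0_lt_compat; lra. }
 pose proof (EE_bound a c Hc). pose proof (Cmod_ge_0 (EE a c)). pose proof (Cmod_ge_0 (cc a N)).
 pose proof (Rabs_pos (INR N * c ^ pred N / (1 - c))).
 apply Rle_trans with (exp (Rabs (fst a) * ln 2) * (Cmod (cc a N) * (2 * (INR N * (1 / 2) ^ pred N)))).
 apply Rmult_le_compat; auto. apply Rmult_le_pos; auto. apply Rmult_le_compat_l; auto. lra. Qed.

Lemma abs_fst_le (z : C) : Rabs (fst z) <= Cmod z.
Proof. eapply Rle_trans; [apply Rmax_l|apply Rmax_Cmod]. Qed.
Lemma abs_snd_le (z : C) : Rabs (snd z) <= Cmod z.
Proof. eapply Rle_trans; [apply Rmax_r|apply Rmax_Cmod]. Qed.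

Definition GG a N s := (FF a N s * EE a s)%C.
Definition GD a N t := (- (EE a t * (cc a N * RtoC (INR N * t ^ pred N / (1 - t)))))%C.

Lemma G_diff a N :
  Rabs (fst (GG a N (1/2)) - fst (GG a N 0)) <= MM a N /\
  Rabs (snd (GG a N (1/2)) - snd (GG a N 0)) <= MM a N.
Proof. split.
 - destruct (MVT_cor2 (fun t => fst (GG a N t)) (fun t => fst (GD a N t)) 0 (1/2)) as [c [E Hc]].
   lra. intros c Hc. apply (CD_G a N c). lra.
   rewrite E. rewrite Rabs_mult. pose proof (Gd_bound a N c ltac:(lra)). change (Cmod (GD a N c) <= 2 * MM a N) in H.
   pose proof (abs_fst_le (GD a N c)). rewrite (Rabs_pos_eq (1/2 - 0)) by lra. lra.
 - destruct (MVT_cor2 (fun t => snd (GG a N t)) (fun t => snd (GD a N t)) 0 (1/2)) as [c [E Hc]].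
   lra. intros c Hc. apply (CD_G a N c). lra.
   rewrite E. rewrite Rabs_mult. pose proof (Gd_bound a N c ltac:(lra)). change (Cmod (GD a N c) <= 2 * MM a N) in H.
   pose proof (abs_snd_le (GD a N c)). rewrite (Rabs_pos_eq (1/2 - 0)) by lra. lra. Qed.

Fixpoint dd (A : R) (N : nat) : R :=
  match N with O => 1 | S n => dd A n * (A + INR n) / INR (S n) end.

Lemma dd_pos A N : 0 < A -> 0 < dd A N.
Proof. intros HA. induction N. simpl; lra.
 change (dd A (S N)) with (dd A N * (A + INR N) / INR (S N)).
 unfold Rdiv. apply Rmult_lt_0_compat. apply Rmult_lt_0_compat; auto.
 pose proof (pos_INR N); lra. apply Rinv_0_lt_compat, lt_0_INR; lia. Qed.

Lemma cc_bound a N : Cmod (cc a N) <= dd (Cmod a + 1) N.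
Proof. induction N.
 - unfold cc. change (dd (Cmod a + 1) 0) with 1. rewrite poch_0. simpl fact. change (INR 1) with 1.
   replace (RtoC 1 * / RtoC 1)%C with (RtoC 1). rewrite Cmod_R, Rabs_R1; lra.
   try tc; field.
 - assert (E : cc a (S N) = (cc a N * (a + RtoC (INR N)) * RtoC (/ INR (S N)))%C).
   { rewrite <- cc_rec, RtoC_inv' by (apply not_0_INR; lia). pose proof (Sn_nz N). try tc; field; auto. }
   rewrite E, !Cmod_mult, Cmod_R, Rabs_pos_eq. change (dd (Cmod a + 1) (S N)) with (dd (Cmod a + 1) N * (Cmod a + 1 + INR N) / INR (S N)). unfold Rdiv.
   apply Rmult_le_compat_r. left; apply Rinv_0_lt_compat, lt_0_INR; lia.
   apply Rmult_le_compat; auto. apply Cmod_ge_0. apply Cmod_ge_0.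
   eapply Rle_trans. apply Cmod_triangle. rewrite Cmod_R, Rabs_pos_eq by apply pos_INR. lra.
   left; apply Rinv_0_lt_compat, lt_0_INR; lia. Qed.

Lemma lim_inv_S : is_lim_seq (fun n => / INR (S n)) 0.
Proof. apply (is_lim_seq_incr_1 (fun n => / INR n)).
 pose proof (is_lim_seq_inv INR p_infty is_lim_seq_INR ltac:(discriminate)). exact H. Qed.

Lemma ww_lim A : 0 < A -> is_lim_seq (fun N => dd A N * (INR N * (1/2) ^ pred N)) 0.
Proof. intros HA. apply is_lim_seq_incr_1.
 set (s := fun n => dd A (S n) * (INR (S n) * (1/2) ^ pred (S n))).
 assert (Hs : forall n, 0 < s n).
 { intros n. unfold s. apply Rmult_lt_0_compat. apply dd_pos; auto.
   apply Rmult_lt_0_compat. apply lt_0_INR; lia. apply pow_lt; lra. }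
 assert (Hex : ex_series (fun n => Rabs (s n))).
 { apply (ex_series_DAlembert s (1/2)). lra. intros n; pose proof (Hs n); lra.
   apply is_lim_seq_ext with (fun n => 1/2 + A/2 * / INR (S n)).
   - intros n. rewrite Rabs_pos_eq. unfold s. simpl pred. change (dd A (S (S n))) with (dd A (S n) * (A + INR (S n)) / INR (S (S n))).
     assert (0 < dd A (S n)) by (apply dd_pos; auto).
     assert (0 < INR (S n)) by (apply lt_0_INR; lia).
     assert (0 < INR (S (S n))) by (apply lt_0_INR; lia).
     assert (0 < (1/2)^n) by (apply pow_lt; lra).
     simpl pow. field. repeat split; lra.
     unfold Rdiv. left. apply Rmult_lt_0_compat. apply Hs. apply Rinv_0_lt_compat, Hs.
   - replace (Finite (1/2)) with (Rbar_plus (1/2) (Rbar_mult (A/2) 0)).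
     apply is_lim_seq_plus'. apply is_lim_seq_const. apply is_lim_seq_mult'. apply is_lim_seq_const.
     apply lim_inv_S. simpl. f_equal. ring. }
 pose proof (ex_series_lim_0 _ Hex).
 apply is_lim_seq_ext with (fun n => Rabs (s n)); auto.
 intros n. rewrite Rabs_pos_eq. reflexivity. left; apply Hs. Qed.

Lemma Cpow_RtoC x m : Cpow (RtoC x) m = RtoC (x ^ m).
Proof. induction m. reflexivity. simpl Cpow. rewrite IHm. simpl pow. rewrite RtoC_mult'. reflexivity. Qed.

Lemma Csum_zero f n : (forall i, f i = RtoC 0) -> Csum f n = RtoC 0.
Proof. intros H. induction n. reflexivity. rewrite Csum_S, IHn, H. cring. Qed.

Lemma EE_half a : (EE a (1/2) * Defs.Cexp (a * RtoC (ln 2)) = RtoC 1)%C.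
Proof. unfold EE. rewrite <- Cexp_add. rewrite <- Cmult_plus_distr_l, <- RtoC_plus'.
 rewrite <- ln_mult by lra. replace ((1 - 1/2) * 2) with 1 by field. rewrite ln_1.
 replace (a * RtoC 0)%C with (RtoC 0) by cring. apply Cexp_0. Qed.

Lemma GG0 a N : GG a (S N) 0 = RtoC 1.
Proof. unfold GG, FF, EE. rewrite Csum_first, Csum_zero.
 replace (1 - 0) with 1 by ring. rewrite ln_1. replace (a * RtoC 0)%C with (RtoC 0) by cring.
 rewrite Cexp_0. unfold cc. rewrite poch_0. simpl fact. simpl pow. change (INR 1) with 1. try tc; field.
 intros i. simpl pow. rewrite Rmult_0_l. cring. Qed.

Lemma MM_lim a : is_lim_seq (MM a) 0.
Proof. apply is_lim_seq_le_le with (fun _ => 0)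
   (fun N => exp (Rabs (fst a) * ln 2) * (dd (Cmod a + 1) N * (INR N * (1/2) ^ pred N))).
 - intros N. unfold MM. assert (0 <= INR N * (1/2)^pred N).
   { apply Rmult_le_pos. apply pos_INR. apply pow_le; lra. }
   pose proof (exp_pos (Rabs (fst a) * ln 2)). pose proof (Cmod_ge_0 (cc a N)).
   pose proof (cc_bound a N). split.
   apply Rmult_le_pos. apply Rmult_le_pos; lra. auto.
   rewrite Rmult_assoc. apply Rmult_le_compat_l. lra. apply Rmult_le_compat_r; auto.
 - apply is_lim_seq_const.
 - replace (Finite 0) with (Rbar_mult (exp (Rabs (fst a) * ln 2)) 0).
   apply is_lim_seq_mult'. apply is_lim_seq_const. apply ww_lim.
   pose proof (Cmod_ge_0 a); lra. simpl. f_equal. ring. Qed.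

Theorem binom_half a : Cseries_sum (fun m => cc a m * Cpow (RtoC (1/2)) m)%C
  (Defs.Cexp (a * RtoC (ln 2)))%C.
Proof.
 set (L := Defs.Cexp (a * RtoC (ln 2))%C).
 assert (E : forall N, Csum (fun m => cc a m * Cpow (RtoC (1/2)) m)%C N = (GG a N (1/2) * L)%C).
 { intros N. unfold GG. rewrite <- Cmult_assoc. unfold L. rewrite EE_half, Cmult_1_r.
   unfold FF. apply Csum_ext_lt. intros i _. rewrite Cpow_RtoC. reflexivity. }
 assert (H1 : is_lim_seq (fun N => fst (GG a (S N) (1/2))) 1).
 { apply is_lim_seq_le_le with (fun N => 1 - MM a (S N)) (fun N => 1 + MM a (S N)).
   intros N. pose proof (proj1 (G_diff a (S N))). rewrite GG0 in H. change (fst (RtoC 1)) with 1 in H.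
   apply Rabs_le_between' in H. lra.
   replace (Finite 1) with (Rbar_minus 1 0). apply is_lim_seq_minus'. apply is_lim_seq_const.
   apply (is_lim_seq_incr_1 (MM a)). apply MM_lim. simpl; f_equal; ring.
   replace (Finite 1) with (Rbar_plus 1 0). apply is_lim_seq_plus'. apply is_lim_seq_const.
   apply (is_lim_seq_incr_1 (MM a)). apply MM_lim. simpl; f_equal; ring. }
 assert (H2 : is_lim_seq (fun N => snd (GG a (S N) (1/2))) 0).
 { apply is_lim_seq_le_le with (fun N => 0 - MM a (S N)) (fun N => 0 + MM a (S N)).
   intros N. pose proof (proj2 (G_diff a (S N))). rewrite GG0 in H. change (snd (RtoC 1)) with 0 in H.
   apply Rabs_le_between' in H. lra.
   replace (Finite 0) with (Rbar_minus 0 0). apply is_lim_seq_minus'. apply is_lim_seq_const.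
   apply (is_lim_seq_incr_1 (MM a)). apply MM_lim. simpl; f_equal; ring.
   replace (Finite 0) with (Rbar_plus 0 0). apply is_lim_seq_plus'. apply is_lim_seq_const.
   apply (is_lim_seq_incr_1 (MM a)). apply MM_lim. simpl; f_equal; ring. }
 apply Cseries_iff. split; apply is_lim_seq_incr_1; eapply is_lim_seq_ext;
   try (intros N; rewrite E; reflexivity); clearbody L; unfold Cmult; cbn [fst snd].
 - replace (Finite (fst L)) with (Finite (1 * fst L - 0 * snd L)) by (f_equal; ring).
   apply is_lim_seq_minus'; apply is_lim_seq_mult'; auto; apply is_lim_seq_const.
 - replace (Finite (snd L)) with (Finite (1 * snd L + 0 * fst L)) by (f_equal; ring).
   apply is_lim_seq_plus'; apply is_lim_seq_mult'; auto; apply is_lim_seq_const.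
Qed.

Ltac gen_exp := repeat match goal with |- context [Defs.Cexp ?z] => let e := fresh "e" in set (e := Defs.Cexp z) in *; clearbody e; change C in e end.
Ltac cring ::= gen_exp; try tc; ring.

Definition Bn (n i : nat) : R := Binomial.C n i.
Lemma Bn_0 n : Bn n 0 = 1.
Proof. unfold Bn, Binomial.C. rewrite Nat.sub_0_r. simpl fact. change (INR 1) with 1. field. apply INR_fact_neq_0. Qed.
Lemma Bn_n n : Bn n n = 1.
Proof. unfold Bn, Binomial.C. rewrite Nat.sub_diag. simpl fact. change (INR 1) with 1. field. apply INR_fact_neq_0. Qed.

Definition TT (n : nat) (f : nat -> C) : C := Csum (fun i => RtoC (Bn n i) * f i)%C (S n).

Lemma TT_rec n f : TT (S n) f = (TT n f + TT n (fun i => f (S i)))%C.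
Proof. unfold TT. rewrite Csum_S, Csum_first, (Csum_first _ n), (Csum_S _ n).
 rewrite (Csum_ext_lt (fun i => RtoC (Bn (S n) (S i)) * f (S i))%C
   (fun i => RtoC (Bn n i) * f (S i) + RtoC (Bn n (S i)) * f (S i))%C).
 rewrite Csum_plus, !Bn_0, !Bn_n. cring.
 intros i Hi. unfold Bn. rewrite <- Binomial.pascal by auto. rewrite RtoC_plus'. cring. Qed.

Lemma Csum_minus f g n : Csum (fun i => f i - g i)%C n = (Csum f n - Csum g n)%C.
Proof. induction n. change (RtoC 0 = RtoC 0 - RtoC 0)%C. cring.
 rewrite !Csum_S, IHn. cring. Qed.

Lemma TT_one n : TT n (fun _ => RtoC 1) = RtoC (2 ^ n).
Proof. induction n. unfold TT. rewrite Csum_S, Csum_0, Bn_0. simpl pow. cring.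
 rewrite TT_rec, IHn. simpl pow. rewrite RtoC_mult'. cring. Qed.

Definition ww (a : C) (i : nat) : C := match i with O => RtoC 1 | _ => (a * / (a + RtoC (INR i)))%C end.
Definition P2 (a : C) : C := Defs.Cexp (a * RtoC (ln 2))%C.

Definition adm (a : C) := forall m : nat, a <> Defs.RtoC (- INR (S m)).

Lemma adm_nz a j : adm a -> (a + RtoC (INR (S j)))%C <> RtoC 0.
Proof. intros ha E. apply (ha j). change (a = RtoC (- INR (S j))). rewrite RtoC_opp'.
 transitivity (a + RtoC (INR (S j)) - RtoC (INR (S j)))%C. cring. rewrite E. cring. Qed.
Lemma adm_nz1 a j : adm a -> (a + RtoC 1 + RtoC (INR j))%C <> RtoC 0.
Proof. intros ha. replace (a + RtoC 1 + RtoC (INR j))%C with (a + RtoC (INR (S j)))%C.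
 apply adm_nz; auto. rewrite S_INR, RtoC_plus'. cring. Qed.
Lemma adm_S a : adm a -> adm (a + RtoC 1)%C.
Proof. intros ha m E. apply (ha (S m)). change (a = RtoC (- INR (S (S m)))).
 change ((a + RtoC 1)%C = RtoC (- INR (S m))) in E.
 rewrite (S_INR (S m)), Ropp_plus_distr, RtoC_plus', <- E, (RtoC_opp' 1). cring. Qed.

Lemma P2_S a : P2 (a + RtoC 1)%C = (RtoC 2 * P2 a)%C.
Proof. unfold P2. rewrite Cmult_plus_distr_r, Cexp_add, Cmult_1_l.
 replace (Defs.Cexp (RtoC (ln 2))) with (RtoC 2). cring.
 unfold Defs.Cexp, RtoC; simpl. rewrite exp_ln by lra. rewrite cos_0, sin_0. f_equal; ring. Qed.

Lemma Cseries_eq f l l' : Cseries_sum f l -> l = l' -> Cseries_sum f l'.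
Proof. intros H ->; auto. Qed.

Lemma term_0 a b c : poch c 0 = RtoC 1 -> hyp2f1_term a b c hh 0 = RtoC 1.
Proof. intros _. unfold hyp2f1_term. normall. rewrite !poch_0. simpl fact. change (INR 1) with 1.
 change (Cpow hh 0) with (RtoC 1). try tc; field. Qed.

Lemma main_ind n : forall a, adm a ->
  Cseries_sum (hyp2f1_term a (a + RtoC (INR (S n)))%C (a + RtoC 1)%C hh) (P2 a * TT n (ww a))%C.
Proof. induction n; intros a ha.
 - eapply Cseries_eq. eapply Cseries_ext; [|apply (binom_half a)].
   + intros m. unfold hyp2f1_term, cc. normall. change (INR 1) with 1.
     assert (poch (a + RtoC 1)%C m <> RtoC 0) by (apply poch_nz; intros; apply adm_nz1; auto).
     pose proof (fact_nz m). unfold hh. try tc; field; repeat split; auto.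
   + unfold TT, P2. rewrite Csum_S, Csum_0, Bn_0. simpl ww. cring.
 - pose proof (IHn a ha) as IH1. pose proof (IHn _ (adm_S a ha)) as IH2.
   assert (Ha1 : (a + RtoC 1)%C <> RtoC 0).
   { replace (a + RtoC 1)%C with (a + RtoC 1 + RtoC (INR 0))%C. apply adm_nz1; auto.
     change (INR 0) with 0. cring. }
   eapply Cseries_eq. eapply Cseries_ext.
   2: apply (Cseries_plus _ _ _ _ IH1 (Cseries_shift _ _ (Cseries_scal (a * hh / (a + RtoC 1))%C _ _ IH2))).
   + intros [|j]. unfold shiftC. rewrite !term_0 by reflexivity. cring.
     unfold shiftC.
     replace (a + RtoC (INR (S (S n))))%C with (a + RtoC (INR (S n)) + RtoC 1)%C.
     replace (a + RtoC 1 + RtoC (INR (S n)))%C with (a + RtoC (INR (S n)) + RtoC 1)%C.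
     symmetry. apply term_rec; auto. apply poch_nz. intros i _.
     replace (a + RtoC 1 + RtoC 1 + RtoC (INR i))%C with (a + RtoC 1 + RtoC (INR (S i)))%C.
     apply adm_nz1; auto. rewrite S_INR, RtoC_plus'. cring.
     cring. rewrite (S_INR (S n)), RtoC_plus'. cring.
   + rewrite TT_rec, P2_S.
     assert (E : TT n (fun i => ww a (S i)) = (a / (a + RtoC 1) * TT n (ww (a + RtoC 1)%C))%C).
     { unfold TT. rewrite <- Csum_scal. apply Csum_ext_lt. intros [|i] _.
       - cbn [ww]. change (INR 1) with 1. try tc; field; auto.
       - pose proof (adm_nz a (S i) ha). pose proof (adm_nz1 a (S i) ha).
         change (ww a (S (S i))) with (a * / (a + RtoC (INR (S (S i)))))%C.
         change (ww (a + RtoC 1)%C (S i)) with ((a + RtoC 1) * / (a + RtoC 1 + RtoC (INR (S i))))%C.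
         replace (a + RtoC (INR (S (S i))))%C with (a + RtoC 1 + RtoC (INR (S i)))%C.
         try tc; field; repeat split; auto. rewrite (S_INR (S i)), RtoC_plus'. cring. }
     rewrite E. unfold hh. replace (1/2) with (/ 2) by field. rewrite RtoC_inv' by lra.
     assert (RtoC 2 <> RtoC 0) by (apply RtoC_nz; lra).
     try tc; field; repeat split; auto.
Qed.


Require Import Defs.
Open Scope R_scope.

Theorem mainTheorem2 (k : nat) (a : Cplx) (hk : (1 <= k)%nat)
  (ha : forall n : nat, a <> RtoC (- INR (S n))) :
  Cseries_sum
    (hyp2f1_term a (Cadd a (RtoC (INR k))) (Cadd a (RtoC 1)) (RtoC (1 / 2)))
    (Cmul (Cpow2 a)
       (Cadd (RtoC (2 ^ (k - 1)))
          (Copp (Csum (fun j =>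
                   Cmul (RtoC (INR (fact (k - 1)) /
                               (INR (fact ((S j) - 1)) * INR (fact (k - (S j) - 1)))))
                        (Cinv (Cadd a (RtoC (INR (S j))))))
                 (k - 1))))).
Proof.
  destruct k as [|n]; [lia|]. change C in a.
  eapply Cseries_eq. apply (main_ind n a ha).
  unfold P2, Cpow2. replace (S n - 1)%nat with n by lia. norm.
  f_equal. rewrite <- TT_one. unfold TT. rewrite !Csum_first.
  match goal with |- context [(- Csum ?F n)%C] =>
    rewrite (Csum_ext_lt F (fun j => RtoC (Bn n (S j)) * RtoC 1 - RtoC (Bn n (S j)) * ww a (S j))%C) end.
  rewrite Csum_minus. cbn [ww]. norm. cring.
  intros j Hj. rewrite Cinv_eq.
  replace (S n - S j - 1)%nat with (n - S j)%nat by lia.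
  replace (S j - 1)%nat with j by lia.
  assert (R1 : INR (fact n) / (INR (fact j) * INR (fact (n - S j))) = Bn n (S j) * INR (S j)).
  { unfold Bn, Binomial.C. rewrite fact_simpl, mult_INR.
    pose proof (INR_fact_neq_0 j). pose proof (INR_fact_neq_0 (n - S j)).
    assert (INR (S j) <> 0) by (apply not_0_INR; lia). field. auto. }
  rewrite R1, RtoC_mult'. cbn [ww].
  pose proof (adm_nz a j ha). norm. try tc; field; auto.
Qed.
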